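(* Let $H=(V,E)$ be a finite hypergraph with edge set $E=\{e_1,\dots,e_m\}$ ($m\ge 1$), where every edge has at least two vertices and $V=e_1\cup\cdots\cup e_m$. Let $e_m^- := e_m\setminus(e_1\cup\cdots\cup e_{m-1})$ and assume $|e_m^-|\ge 2$. Assume moreover: 1. if $|V|\equiv 0 \pmod 4$, then $m\equiv 1\pmod 4$; 2. if $|V|\equiv 2\pmod 4$, then $m\not\equiv 0\pmod 4$; 3. if $|V|\equiv 3\pmod 4$ and $|e_m^-|=2$, then $m\not\equiv 0\pmod 4$. Let $H^-$ be the hypergraph with vertex set $V\setminus e_m^-$ and edge set $\{e_1,\dots,e_{m-1}\}$. If $H^-$ is $\mathbb{Z}_2\times\mathbb{Z}_2$-cordial, then $H$ is $\mathbb{Z}_2\times\mathbb{Z}_2$-cordial.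
   Context: Let $A=\mathbb{Z}_2\times\mathbb{Z}_2$ (the Klein four-group). For a hypergraph $H=(V,E)$ (edges are non-empty subsets of $V$) and a labeling $c:V\to A$, write $v_c(a)=|c^{-1}(a)|$. The labeling $c$ is $A$-friendly if $|v_c(a)-v_c(b)|\le 1$ for all $a,b\in A$. It induces the edge labeling $c^*:E\to A$, $c^*(e)=\sum_{v\in e}c(v)$; write $e_{c^*}(a)=|(c^* )^{-1}(a)|$. The hypergraph $H$ is $A$-cordial if it admits an $A$-friendly labeling $c$ such that $|e_{c^*}(a)-e_{c^*}(b)|\le 1$ for all $a,b\in A$. *)

(* Defs.v *)
From HB Require Import structures.
From mathcomp Require Import all_boot all_order all_algebra.
Set Implicit Arguments. Unset Strict Implicit. Unset Printing Implicit Defensive.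
Import GRing.Theory.

Definition klein := ('Z_2 * 'Z_2)%type.

(* A hypergraph is given by a vertex set V : {set T} and a list of edges
   E : seq {set T} (edges are subsets of V). *)

Definition vcount (T : finType) (V : {set T}) (c : T -> klein) (a : klein) : nat :=
  #|[set v in V | c v == a]|.

Definition elabel (T : finType) (c : T -> klein) (e : {set T}) : klein :=
  (\sum_(v in e) c v)%R.

Definition ecount (T : finType) (E : seq {set T}) (c : T -> klein) (a : klein) : nat :=
  count (fun e => elabel c e == a) E.

Definition friendly (T : finType) (V : {set T}) (c : T -> klein) : Prop :=
  forall a b : klein, vcount V c a <= vcount V c b + 1.

Definition cordial (T : finType) (V : {set T}) (E : seq {set T}) : Prop :=
  exists c : T -> klein, friendly V c /\
    (forall a b : klein, ecount E c a <= ecount E c b + 1).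

(* Main.v *)
Require Import Defs.
From HB Require Import structures.
From mathcomp Require Import all_boot all_order all_algebra.
Import GRing.Theory.
From mathcomp Require Import zify.
Definition B2 := (bool * bool)%type.
Definition kc : seq B2 := [:: (false,false); (false,true); (true,false); (true,true)].
Definition xadd (x y : B2) : B2 := (addb x.1 y.1, addb x.2 y.2).
Definition xsum (L : seq B2) : B2 := foldr xadd (false,false) L.
Definition mkc (e1 e2 e3 e4 : nat) (a : B2) : nat :=
  match a with (false,false) => e1 | (false,true) => e2 | (true,false) => e3 | (true,true) => e4 end.
Definition beq (x y : B2) : bool := match x, y with (a,b),(c,d) => (if a then c else negb c) && (if b then d else negb d) end.
Definition cnt (a : B2) (L : seq B2) := count (beq a) L.
Definition balc (f : B2 -> nat) := all (fun a => all (fun b => f a <= f b + 1) kc) kc.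
Definition cands (k : nat) : seq (seq B2) :=
  flatten (flatten [seq [seq [seq nseq i (false,false) ++ nseq j (false,true) ++ nseq l (true,false) ++ nseq (k - (i + j + l)) (true,true)
    | l <- iota 0 (k - (i + j)).+1] | j <- iota 0 (k - i).+1] | i <- iota 0 k.+1]).
Definition b01 := [:: 0; 1].
Definition okE (e : B2 -> nat) (k : nat) (L : seq B2) := (size L == k) && balc (fun a => e a + cnt a L).
Definition Sl (e : B2 -> nat) (k : nat) := undup [seq xsum L | L <- cands k & okE e k L].
Definition g (N k : nat) := match N %% 4 with 0 => 1 | 1 => 4 | 2 => 3 | _ => if k == 2 then 3 else 4 end.
Definition hM (M : nat) := match M %% 4 with 1 => 4 | 0 => 1 | _ => 2 end.
Definition isMin (d : B2 -> nat) (x : B2) := all (fun z => d x <= d z) kc.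
Definition checkS :=
  all (fun e1 => all (fun e2 => all (fun e3 => all (fun e4 => all (fun k =>
    g (e1+e2+e3+e4+k) k <= size (Sl (mkc e1 e2 e3 e4) k)) (iota 2 5)) b01) b01) b01) b01.
Definition checkM :=
  all (fun d1 => all (fun d2 => all (fun d3 => all (fun d4 =>
    hM (d1+d2+d3+d4+1) <= size (filter (isMin (mkc d1 d2 d3 d4)) kc)) b01) b01) b01) b01.
Lemma checkST : checkS. Proof. exact (erefl true). Qed.
Lemma checkMT : checkM. Proof. exact (erefl true). Qed.
Definition dec (x : B2) : klein := ((nat_of_bool x.1)%:R, (nat_of_bool x.2)%:R)%R.
Definition enc (a : klein) : B2 := (a.1 != 0%R, a.2 != 0%R).
Lemma Z2_cases (z : 'Z_2) : z = 0%R \/ z = 1%R.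
Proof. case: z => [[|[|m]] Hm]; [left|right|by []]; exact: val_inj. Qed.
Lemma decK a : dec (enc a) = a.
Proof.
case: a => x y; rewrite /dec /enc /=.
by case: (Z2_cases x) => ->; case: (Z2_cases y) => ->.
Qed.

Lemma dec_eq x y : (dec x == dec y) = beq x y.
Proof. by case: x => [[] []]; case: y => [[] []]. Qed.

Lemma dec_inj : injective dec.
Proof. by move=> x y /eqP; rewrite dec_eq; case: x => [[] []]; case: y => [[] []]. Qed.

Lemma dec_add x y : dec (xadd x y) = (dec x + dec y)%R.
Proof. by case: x => [[] []]; case: y => [[] []]; apply/eqP. Qed.

Lemma in_kc x : x \in kc.
Proof. by case: x => [[] []]. Qed.
Lemma beq_sym x y : beq x y = beq y x.
Proof. by case: x => [[] []]; case: y => [[] []]. Qed.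

Lemma dec0 : dec (false, false) = 0%R.
Proof. by apply/eqP. Qed.

Lemma sum_dec (L : seq B2) : (\sum_(x <- map dec L) x)%R = dec (xsum L).
Proof.
elim: L => [|x L IH]; first by rewrite big_nil dec0.
by rewrite /= big_cons IH dec_add.
Qed.

Lemma cnt_dec (L : seq B2) y : count_mem (dec y) (map dec L) = cnt y L.
Proof.
rewrite count_map /cnt; apply: eq_count => x /=.
by rewrite dec_eq beq_sym.
Qed.

Definition Se (f : klein -> nat) : nat :=
  f (dec (false,false)) + f (dec (false,true)) + f (dec (true,false)) + f (dec (true,true)).

Definition condP (N M k : nat) : Prop :=
  [/\ N %% 4 = 0 -> M %% 4 = 1, N %% 4 = 2 -> M %% 4 <> 0 & N %% 4 = 3 -> k = 2 -> M %% 4 <> 0].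

Lemma in01 n : n <= 1 -> n \in b01.
Proof. by case: n => [|[|]]. Qed.

Lemma balcP {f} : balc f -> forall x y, f x <= f y + 1.
Proof. by move=> /allP H x y; move: (H x (in_kc x)) => /allP /(_ y (in_kc y)). Qed.

Lemma mkcE (e : klein -> nat) x :
  mkc (e (dec (false,false))) (e (dec (false,true))) (e (dec (true,false))) (e (dec (true,true))) x
  = e (dec x).
Proof. by case: x => [[] []]. Qed.


Lemma beqE x y : beq x y = (x == y).
Proof. by case: x => [[] []]; case: y => [[] []]. Qed.

Lemma xaddK s y : xadd s (xadd s y) = y.
Proof. by case: s => [[] []]; case: y => [[] []]. Qed.

Lemma xadd_inj s : injective (xadd s).
Proof. exact: (can_inj (xaddK s)). Qed.

Lemma gh {N M k} : condP N M k -> 5 <= g N k + hM M.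
Proof.
case=> h1 h2 h3; rewrite /g /hM.
move: (ltn_pmod N (isT : 0 < 4)) (ltn_pmod M (isT : 0 < 4)) h1 h2 h3.
case: (N %% 4) => [|[|[|[|n]]]]; case: (M %% 4) => [|[|[|[|p]]]] //= _ _ h1 h2 h3;
  try (by move: (h1 erefl)); try (by case: (h2 erefl));
  case: eqP => // Hk2; by case: (h3 erefl Hk2).
Qed.

Lemma minbal (d : B2 -> nat) x : (forall z, d z <= 1) -> isMin d x ->
  forall a b, d a + beq x a <= d b + beq x b + 1.
Proof.
move=> H1 /allP Hm a b; rewrite !beqE.
case: eqP => [<-|_]; last by move: (H1 a); lia.
by move: (Hm b (in_kc b)); lia.
Qed.

Lemma K0 (ε δ : klein -> nat) (s : klein) (k : nat) :
  (forall a, ε a <= 1) -> (forall a, δ a <= 1) -> 2 <= k ->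
  condP (Se ε + k) (Se δ + 1) k ->
  exists L : seq klein, size L = k /\
   (forall a b, ε a + count_mem a L <= ε b + count_mem b L + 1) /\
   (forall a b, δ a + ((s + \sum_(x <- L) x)%R == a) <= δ b + ((s + \sum_(x <- L) x)%R == b) + 1).
Proof.
move=> He Hd; elim/ltn_ind: k => k IH Hk Hc.
case: (leqP k 6) => Hk6.
  have Hki : k \in iota 2 5 by rewrite mem_iota; apply/andP; split => //; lia.
  have := checkST; rewrite /checkS.
  move=> /allP /(_ _ (in01 _ (He (dec (false,false))))).
  move=> /allP /(_ _ (in01 _ (He (dec (false,true))))).
  move=> /allP /(_ _ (in01 _ (He (dec (true,false))))).
  move=> /allP /(_ _ (in01 _ (He (dec (true,true))))).
  move=> /allP /(_ _ Hki) HS.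
  have := checkMT; rewrite /checkM.
  move=> /allP /(_ _ (in01 _ (Hd (dec (false,false))))).
  move=> /allP /(_ _ (in01 _ (Hd (dec (false,true))))).
  move=> /allP /(_ _ (in01 _ (Hd (dec (true,false))))).
  move=> /allP /(_ _ (in01 _ (Hd (dec (true,true))))) HM.
  have G := gh Hc; rewrite /Se in G.
  set Sy := Sl _ k in HS; set Ml := filter _ kc in HM.
  have [y Hy Hx] : exists2 y, y \in Sy & xadd (enc s) y \in Ml.
    apply/hasP; apply: contraT => Hn.
    have U : uniq (map (xadd (enc s)) Sy ++ Ml).
      rewrite cat_uniq (map_inj_uniq (@xadd_inj _)) undup_uniq filter_uniq //=.
      rewrite andbT; apply/hasPn => z Hz; apply/negP => /mapP [y' Hy' Ez].
      by move/hasPn: Hn => /(_ y' Hy'); rewrite -Ez Hz.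
    have := uniq_leq_size U (fun z _ => in_kc z).
    rewrite size_cat size_map /= => Hle.
    by rewrite ltnNge (leq_trans (leq_add HS HM) Hle) in G.
  move: Hy; rewrite mem_undup => /mapP [L']; rewrite mem_filter => /andP [HokE _] Ey.
  move: HokE => /andP [/eqP HL Hb1].
  move: Hx; rewrite mem_filter => /andP [Hmin _].
  exists (map dec L'); split; first by rewrite size_map HL.
  rewrite sum_dec -(decK s) -dec_add; split=> a b; rewrite -(decK a) -(decK b).
  - rewrite !cnt_dec; move: (balcP Hb1 (enc a) (enc b)); by rewrite !mkcE.
  - rewrite !dec_eq -Ey.
    have Hd1 : forall z, mkc (δ (dec (false,false))) (δ (dec (false,true)))
        (δ (dec (true,false))) (δ (dec (true,true))) z <= 1.
      by move=> z; rewrite mkcE.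
    by move: (@minbal _ _ Hd1 Hmin (enc a) (enc b)); rewrite !mkcE.
have [|||L' [HL [H1 H2]]] := IH (k - 4); [lia|lia| |].
  case: Hc => h1 h2 h3; set X := Se ε; set Y := Se δ.
  have E : (X + k) %% 4 = (X + (k - 4)) %% 4.
    lia.
  split => h; [apply: h1|apply: h2|move=> ?; lia]; by rewrite E.
exists (L' ++ map dec kc); split; first by rewrite size_cat size_map HL /=; lia.
have C a : count_mem a (map dec kc) = 1.
  by rewrite -(decK a) cnt_dec; case: (enc a) => [[] []].
have S0 : (\sum_(x <- map dec kc) x)%R = 0%R.
  by rewrite sum_dec (_ : xsum kc = (false, false)) // dec0.
split=> a b.
- rewrite !count_cat !C; move: (H1 a b); lia.
- have BC : forall A B : seq klein, (\sum_(x <- A ++ B) x = \sum_(x <- A) x + \sum_(x <- B) x)%R.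
    by move=> A B; rewrite big_cat.
  by rewrite BC S0 addr0; exact: H2.
Qed.

Lemma shift {f : klein -> nat} : (forall a b, f a <= f b + 1) ->
  exists mu, forall a, mu <= f a <= mu + 1.
Proof.
move=> Hb.
exists (minn (minn (f (dec (false,false))) (f (dec (false,true))))
             (minn (f (dec (true,false))) (f (dec (true,true))))).
move=> a.
have h1 := Hb a (dec (false,false)); have h2 := Hb a (dec (false,true)).
have h3 := Hb a (dec (true,false)); have h4 := Hb a (dec (true,true)).
move: h1 h2 h3 h4; rewrite -(decK a); case: (enc a) => [[] []] /=; lia.
Qed.

Lemma K (vc ec : klein -> nat) (s : klein) (k : nat) :
  (forall a b, vc a <= vc b + 1) -> (forall a b, ec a <= ec b + 1) -> 2 <= k ->
  condP (Se vc + k) (Se ec + 1) k ->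
  exists L : seq klein, size L = k /\
   (forall a b, vc a + count_mem a L <= vc b + count_mem b L + 1) /\
   (forall a b, ec a + ((s + \sum_(x <- L) x)%R == a) <= ec b + ((s + \sum_(x <- L) x)%R == b) + 1).
Proof.
move=> Hv He Hk Hc.
have [mu Hmu] := shift Hv; have [nu Hnu] := shift He.
have [|||L [HL [H1 H2]]] := @K0 (fun a => vc a - mu) (fun a => ec a - nu) s k _ _ Hk.
- by move=> a; move: (Hmu a); lia.
- by move=> a; move: (Hnu a); lia.
- have EV : Se vc + k = mu * 4 + (Se (fun a => vc a - mu) + k).
    rewrite /Se; move: (Hmu (dec (false,false))) (Hmu (dec (false,true)))
      (Hmu (dec (true,false))) (Hmu (dec (true,true))); lia.
  have EE : Se ec + 1 = nu * 4 + (Se (fun a => ec a - nu) + 1).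
    rewrite /Se; move: (Hnu (dec (false,false))) (Hnu (dec (false,true)))
      (Hnu (dec (true,false))) (Hnu (dec (true,true))); lia.
  by move: Hc; rewrite /condP EV EE !modnMDl.
exists L; split => //; split => a b.
- by move: (H1 a b) (Hmu a) (Hmu b); lia.
- by move: (H2 a b) (Hnu a) (Hnu b); lia.
Qed.

Lemma one_Se (x : klein) : Se (fun a => nat_of_bool (x == a)) = 1.
Proof. by rewrite /Se -(decK x) !dec_eq; case: (enc x) => [[] []]. Qed.

Lemma Se_count (T : finType) (f : {set T} -> klein) s :
  Se (fun a => count (fun e => f e == a) s) = size s.
Proof.
elim: s => [|e s IH] //=; move: (one_Se (f e)) IH; rewrite /Se /=; lia.
Qed.

Lemma vcountE (T : finType) (A : {set T}) c a :
  vcount A c a = \sum_(v in A) nat_of_bool (c v == a).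
Proof.
rewrite /vcount -sum1_card big_mkcond [RHS]big_mkcond; apply: eq_bigr => v _.
by rewrite inE; case: (v \in A); case: (c v == a).
Qed.

Lemma Se_vcount (T : finType) (A : {set T}) c : Se (fun a => vcount A c a) = #|A|.
Proof.
rewrite /Se !vcountE -!big_split /= -sum1_card; apply: eq_bigr => v _.
by move: (one_Se (c v)); rewrite /Se.
Qed.

Lemma map_nth_index (T : eqType) (s : seq T) (L : seq klein) :
  uniq s -> size L = size s -> map (fun v => nth 0%R L (index v s)) s = L.
Proof.
move=> Us HL; apply: (@eq_from_nth _ 0%R); first by rewrite size_map HL.
move=> i; rewrite size_map => Hi.
case Es: s Hi => [|x0 s'] // Hi; rewrite -Es in Hi *.
by rewrite (nth_map x0) // index_uniq.
Qed.

Lemma cnt_sum (L : seq klein) a : \sum_(x <- L) nat_of_bool (x == a) = count_mem a L.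
Proof. by elim: L => [|x L IH]; rewrite ?big_nil ?big_cons ?IH. Qed.

Theorem theorem2 (T : finType) (es : seq {set T}) (em : {set T}) :
  let E := rcons es em in
  let m := (size es).+1 in
  let V := \bigcup_(e <- E) e in
  let emm := em :\: \bigcup_(e <- es) e in
  uniq E ->
  (forall e, e \in E -> 2 <= #|e|) ->
  2 <= #|emm| ->
  (#|V| %% 4 = 0 -> m %% 4 = 1) ->
  (#|V| %% 4 = 2 -> m %% 4 <> 0) ->
  (#|V| %% 4 = 3 -> #|emm| = 2 -> m %% 4 <> 0) ->
  cordial (V :\: emm) es -> cordial V E.
Proof.
move=> E m V emm Huq Hsz Hk H1 H2 H3 [c' [Hfr Hcd]].
set U := \bigcup_(e <- es) e.
have HV : V = U :|: em by rewrite /V /E big_rcons.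
have HemmD : emm = em :\: U by [].
have HVU : V :&: U = U.
  by rewrite HV; apply/setP => v; rewrite !inE; case: (v \in U); case: (v \in em).
have HVD : V :\: U = emm.
  by rewrite HV HemmD; apply/setP => v; rewrite !inE; case: (v \in U); case: (v \in em).
have HVm : V :\: emm = U.
  by rewrite HV HemmD; apply/setP => v; rewrite !inE; case: (v \in U); case: (v \in em).
rewrite HVm in Hfr.
have cardV : #|V| = #|U| + #|emm|.
  by rewrite -[#|V|]sum1_card (big_setID U) HVU HVD !sum1_card.
have HcU : #|U| = Se (fun a => vcount U c' a) by rewrite Se_vcount.
have Hm : m = Se (fun a => ecount es c' a) + 1 by rewrite /ecount Se_count addn1.
have Hc : condP (Se (fun a => vcount U c' a) + #|emm|) (Se (fun a => ecount es c' a) + 1) #|emm|.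
  by rewrite -Hm -HcU -cardV; split.
have [L [HL [HLv HLe]]] := @K (fun a => vcount U c' a) (fun a => ecount es c' a)
   (elabel c' (em :&: U)) #|emm| Hfr Hcd Hk Hc.
set ee := enum emm.
pose c v := if v \in emm then nth 0%R L (index v ee) else c' v.
have Hmap : map c ee = L.
  rewrite -[RHS](@map_nth_index _ ee L (enum_uniq _)); last by rewrite HL -cardE.
  by apply/eq_in_map => v; rewrite mem_enum /c => ->.
have HcU' v : v \in U -> c v = c' v.
  by move=> Hv; rewrite /c; have /negbTE -> : v \notin emm by rewrite HemmD inE Hv.
have Hsum R (idx : R) (op : Monoid.com_law idx) (F : klein -> R) :
    \big[op/idx]_(v in emm) F (c v) = \big[op/idx]_(x <- L) F x.
  by rewrite -Hmap big_map /ee big_enum.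
exists c; split.
  have E' x : vcount V c x = vcount U c' x + count_mem x L.
    rewrite !vcountE (big_setID U) HVU HVD /= (Hsum _ _ _ (fun y => nat_of_bool (y == x))) cnt_sum; congr (_ + _).
    by apply: eq_bigr => v Hv; rewrite HcU'.
  by move=> a b; rewrite !E'; exact: HLv.
have El : elabel c em = (elabel c' (em :&: U) + \sum_(x <- L) x)%R.
  rewrite /elabel (big_setID U) -HemmD; congr (_ + _)%R.
    by apply: eq_bigr => v; rewrite inE => /andP [_ Hv]; rewrite HcU'.
  exact: (Hsum _ _ _ (fun x => x)).
have E' x : ecount E c x = ecount es c' x + (elabel c em == x).
  rewrite /ecount /E -cats1 count_cat /= addn0; congr (_ + _).
  apply: eq_in_count => e He /=; congr (_ == _).
  rewrite /elabel; apply: eq_bigr => v Hv; apply: HcU'.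
  by rewrite /U bigcup_seq; apply/bigcupP; exists e.
by move=> a b; rewrite !E' El; exact: HLe.
Qed.
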